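(* Let $n\ge1$, $p<0$, let $\mathcal{S}$ be a discrete subgroup of $O(n+1)$ satisfying the spanning property, and let $f$ be a positive $\mathcal{S}$-invariant function on $\mathbb{S}^n$ with $c_1\le f\le c_2$. There is a constant $C_n(\mathcal{S})>0$ depending only on $n$ and $\mathcal{S}$ such that for every $\Omega\in\mathcal{K}_p(\mathcal{S})$, $$h_\Omega(x)\le C_n(\mathcal{S})\qquad\forall x\in\mathbb{S}^n.$$
   Context: $\mathcal{K}_p(\mathcal{S})=\{\Omega\in\mathcal{K}_0(\mathcal{S}):\int_{\mathbb{S}^n}fh_\Omega^p=\int_{\mathbb{S}^n}f\}$, where $\mathcal{K}_0(\mathcal{S})$ is the set of convex bodies in $\mathbb{R}^{n+1}$ containing the origin and invariant under all $\phi\in\mathcal{S}$, and $h_\Omega$ is the support function. Spanning property: for every $a\in\mathbb{S}^n$, $\mathrm{conv}\{\phi(a):\phi\in\mathcal{S}\}$ is a non-degenerate $(n+1)$-dimensional polytope. *)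

(* Defs.v *)
From HB Require Import structures.
From mathcomp Require Import all_boot all_order all_algebra.
From mathcomp Require Import all_classical all_reals all_analysis.
Set Implicit Arguments. Unset Strict Implicit. Unset Printing Implicit Defensive.
Import Order.TTheory GRing.Theory Num.Theory.
Import numFieldNormedType.Exports.
Local Open Scope classical_set_scope.
Local Open Scope ring_scope.

Section Defs.
Context {R : realType}.

Definition dotv k (x y : 'rV[R]_k) : R := \sum_(i < k) x 0 i * y 0 i.
Definition normv k (x : 'rV[R]_k) : R := Num.sqrt (dotv x x).
Definition sphere k : set 'rV[R]_k := [set x | dotv x x = 1].

(* action of a matrix on R^k (row-vector convention) *)
Definition act k (A : 'M[R]_k) (x : 'rV[R]_k) : 'rV[R]_k := x *m A.

Definition orthogonal_mx k (A : 'M[R]_k) : Prop := A *m A^T = 1%:M.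

Definition subgroup_O k (S : set 'M[R]_k) : Prop :=
  [/\ S 1%:M,
      (forall A B, S A -> S B -> S (A *m B)),
      (forall A, S A -> S (invmx A)) &
      (forall A, S A -> orthogonal_mx A)].

Definition discrete_set k (S : set 'M[R]_k) : Prop :=
  forall A, S A -> exists U, nbhs A U /\ U `&` S `<=` [set A].

Definition conv_hull k (A : set 'rV[R]_k) : set 'rV[R]_k :=
  [set x | exists m (pts : 'I_m -> 'rV[R]_k) (w : 'I_m -> R),
     [/\ (forall i, A (pts i)), (forall i, 0 <= w i), \sum_(i < m) w i = 1 &
         x = \sum_(i < m) w i *: pts i]].

Definition polytope k (P : set 'rV[R]_k) : Prop :=
  exists m (pts : 'I_m -> 'rV[R]_k), P = conv_hull (range pts).

Definition nondeg_polytope k (P : set 'rV[R]_k) : Prop :=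
  polytope P /\ (interior P !=set0).

Definition spanning_property k (S : set 'M[R]_k) : Prop :=
  forall a, @sphere k a -> nondeg_polytope (conv_hull [set act phi a | phi in S]).

Definition convex_set k (K : set 'rV[R]_k) : Prop :=
  forall x y (t : R), K x -> K y -> 0 <= t <= 1 -> K (t *: x + (1 - t) *: y).

Definition convex_body k (K : set 'rV[R]_k) : Prop :=
  [/\ compact K, convex_set K & interior K !=set0].

Definition K0 k (S : set 'M[R]_k) (K : set 'rV[R]_k) : Prop :=
  [/\ convex_body K, K 0 & forall phi, S phi -> [set act phi x | x in K] = K].

Definition support_fun k (K : set 'rV[R]_k) (x : 'rV[R]_k) : R :=
  sup [set dotv x y | y in K].

(* t^p for p < 0 on [0, +oo), with 0^p = +oo *)
Definition powE (t p : R) : \bar R :=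
  if t == 0 then +oo%E else (t `^ p)%:E.

Definition consv k (t : R) (y : 'rV[R]_k) : 'rV[R]_k.+1 :=
  \row_(i < k.+1) match unlift ord0 i with Some j => y 0 j | None => t end.

(* iterated Lebesgue integral over R^k (equal to the Lebesgue integral on
   R^k for nonnegative Borel functions, by Tonelli) *)
Fixpoint iint (k : nat) : ('rV[R]_k -> \bar R) -> \bar R :=
  match k return ('rV[R]_k -> \bar R) -> \bar R with
  | 0 => fun g => g 0
  | k'.+1 => fun g =>
      (\int[@lebesgue_measure R]_(t in setT) iint (fun y => g (consv t y)))%E
  end.

(* integral over the unit sphere S^{k-1} w.r.t. surface measure, via the
   cone-volume formula  sigma(A) = k * vol({t a : a in A, 0 < t <= 1}) *)
Definition sphere_int k (F : 'rV[R]_k -> \bar R) : \bar R :=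
  ((k%:R)%:E * iint (fun x => if ((0 < normv x) && (normv x <= 1))%R
                               then F ((normv x)^-1 *: x) else 0%E))%E.

(* Borel measurability of a function on the sphere: its radial extension to
   R^k \ {0} is Borel *)
Definition sphere_borel k (F : 'rV[R]_k -> R) : Prop :=
  forall B : set R, measurable B ->
    <<s [set U : set 'rV[R]_k | open U] >>
      [set x | x != 0 /\ B (F ((normv x)^-1 *: x))].

Definition Kp k (S : set 'M[R]_k) (p : R) (f : 'rV[R]_k -> R)
    (K : set 'rV[R]_k) : Prop :=
  K0 S K /\
  sphere_int (fun x => ((f x)%:E * powE (support_fun K x) p)%E) =
  sphere_int (fun x => (f x)%:E).

End Defs.
Arguments sphere {R} k.

(* Main.v *)
Require Import Defs.
From HB Require Import structures.
From mathcomp Require Import all_boot all_order all_algebra.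
From mathcomp Require Import all_classical all_reals all_analysis.
From mathcomp Require Import measurable_realfun.
From mathcomp Require Import ring lra.
Import Order.TTheory GRing.Theory Num.Theory.
Set Implicit Arguments. Unset Strict Implicit. Unset Printing Implicit Defensive.
Import numFieldNormedType.Exports.
Local Open Scope classical_set_scope.
Local Open Scope ring_scope.
Section Integ.
Context {R : realType}.
Local Open Scope ereal_scope.
Notation mu := (@lebesgue_measure R).
Import HBNNSimple.

Lemma int_le (f g : R -> \bar R) : (forall x, 0 <= f x) -> (forall x, f x <= g x) ->
  \int[mu]_(x in setT) f x <= \int[mu]_(x in setT) g x.
Proof.
move=> f0 fg.
have g0 : forall x, 0 <= g x by move=> x; exact: le_trans (f0 x) (fg x).
rewrite !ge0_integralTE //; apply: ereal_sup_le => _ [h /= hf <-].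
exists h => //= x; exact: le_trans (hf x) (fg x).
Qed.

Lemma int_scale (f g : R -> \bar R) (l : R) : (0 < l)%R ->
  (forall x, 0 <= g x) -> (forall x, g x <= l%:E * f x) ->
  \int[mu]_(x in setT) g x <= l%:E * \int[mu]_(x in setT) f x.
Proof.
move=> l0 g0 gf.
rewrite ge0_integralTE //; apply: ge_ereal_sup => _ [h /= hg <-].
rewrite -integralT_nnsfun.
have -> : (fun x => (h x)%:E) = (fun x => l%:E * (l^-1 * h x)%:E).
  apply/funext => x; rewrite -EFinM mulrA mulfV ?mul1r //; exact: lt0r_neq0.
rewrite ge0_integralZl_EFin //; last exact: ltW.
- rewrite lee_wpmul2l // ?lee_fin ?(ltW l0) //; apply: int_le.
    move=> x; rewrite lee_fin mulr_ge0 // ?invr_ge0 ?(ltW l0) //.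
  move=> x; rewrite -(@lee_pmul2l _ l%:E) ?lte_fin // EFinM muleA -EFinM mulfV ?mul1e ?(lt0r_neq0 l0) //.
  rewrite mul1r; exact: le_trans (hg x) (gf x).
- move=> x _; rewrite lee_fin mulr_ge0 // invr_ge0 ltW //.
- apply/measurable_EFinP; apply: measurable_funM => //; exact: measurable_funP.
Qed.
End Integ.
Section IInt.
Context {R : realType}.
Local Open Scope ereal_scope.
Notation mu := (@lebesgue_measure R).

Lemma consv0 k (t : R) (y : 'rV[R]_k) : consv t y 0%R ord0 = t.
Proof. by rewrite /consv mxE unlift_none. Qed.

Lemma consvS k (t : R) (y : 'rV[R]_k) j : consv t y 0%R (lift ord0 j) = y 0%R j.
Proof. by rewrite /consv mxE liftK. Qed.

Lemma iint_ge0 k (g : 'rV[R]_k -> \bar R) : (forall x, 0 <= g x) -> 0 <= iint g.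
Proof.
elim: k g => [|k IH] g g0 /=; first exact: g0.
apply: integral_ge0 => t _; exact: IH.
Qed.

Lemma iint0 k (g : 'rV[R]_k -> \bar R) : (forall x, g x = 0) -> iint g = 0.
Proof.
elim: k g => [|k IH] g g0 /=; first exact: g0.
apply: integral0_eq => t _; exact: IH.
Qed.

Lemma iint_le k (g1 g2 : 'rV[R]_k -> \bar R) : (forall x, 0 <= g1 x) ->
  (forall x, g1 x <= g2 x) -> iint g1 <= iint g2.
Proof.
elim: k g1 g2 => [|k IH] g1 g2 g0 g12 /=; first exact: g12.
apply: int_le => t; first exact: iint_ge0.
exact: IH.
Qed.

Lemma iint_scale k (g f : 'rV[R]_k -> \bar R) (l : R) : (0 < l)%R ->
  (forall x, 0 <= g x) -> (forall x, g x <= l%:E * f x) ->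
  iint g <= l%:E * iint f.
Proof.
elim: k g f => [|k IH] g f l0 g0 gf /=; first exact: gf.
apply: int_scale => // t; first exact: iint_ge0.
exact: IH.
Qed.

Definition boxp k (a b : R) (x : 'rV[R]_k) := forall i, (a <= x 0%R i <= b)%R.


Lemma boxp_cons k a b t (y : 'rV[R]_k) :
  boxp a b (consv t y) <-> (a <= t <= b)%R /\ boxp a b y.
Proof.
split.
  move=> H; split; first by have := H ord0; rewrite consv0.
  by move=> j; have := H (lift ord0 j); rewrite consvS.
move=> [Ht Hy] i; case: (unliftP ord0 i) => [j ->|->].
  by rewrite consvS.
by rewrite consv0.
Qed.

Lemma int_indic_itv (a b c : R) : (a <= b)%R -> (0 <= c)%R ->
  \int[mu]_(t in setT) (c * \1_`[a, b] t)%:E = (c * (b - a))%:E.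
Proof.
move=> ab c0.
under eq_integral do rewrite EFinM.
rewrite ge0_integralZl_EFin //.
- rewrite integral_indic //= setIT lebesgue_measure_itv /=.
  case: ifPn => [_|]; first by rewrite -EFinD -EFinM.
  rewrite lte_fin -leNgt => ba.
  have eba : b = a by apply/eqP; rewrite eq_le ab ba.
  by rewrite eba subrr mulr0 mule0.
- apply/measurable_EFinP; exact: measurable_indic.
Qed.

Lemma iint_box_upper k (g : 'rV[R]_k -> \bar R) (a b c : R) : (a <= b)%R -> (0 <= c)%R ->
  (forall x, 0 <= g x) -> (forall x, g x <= c%:E) -> (forall x, ~ boxp a b x -> g x = 0) ->
  iint g <= (c * (b - a) ^+ k)%:E.
Proof.
move=> ab c0.
elim: k g => [|k IH] g g0 gc gb /=; first by rewrite expr0 mulr1.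
apply: le_trans (_ : _ <= \int[mu]_(t in setT) ((c * (b - a) ^+ k) * \1_`[a, b] t)%:E) _.
  apply: int_le => t; first exact: iint_ge0.
  have [tab|tab] := boolP (t \in `[a, b]).
    rewrite indicE mem_setE tab mulr1; apply: IH.
    - by move=> y; exact: g0.
    - by move=> y; exact: gc.
    - move=> y Hy; apply: gb => /boxp_cons [_ ?]; exact: Hy.
  rewrite indicE mem_setE (negbTE tab) mulr0 iint0 // => y; apply: gb => /boxp_cons [Ht _].
  by move: tab; rewrite in_itv /= Ht.
rewrite int_indic_itv // ?mulr_ge0 ?exprn_ge0 ?subr_ge0 //.
by rewrite exprSr mulrA.
Qed.

Lemma iint_box_lower k (g : 'rV[R]_k -> \bar R) (a b c : R) : (a <= b)%R -> (0 <= c)%R ->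
  (forall x, 0 <= g x) -> (forall x, boxp a b x -> c%:E <= g x) ->
  (c * (b - a) ^+ k)%:E <= iint g.
Proof.
move=> ab c0.
elim: k g => [|k IH] g g0 gb /=.
  by rewrite expr0 mulr1; apply: gb; case.
apply: le_trans (_ : _ <= \int[mu]_(t in setT) ((c * (b - a) ^+ k) * \1_`[a, b] t)%:E) _.
  rewrite int_indic_itv // ?mulr_ge0 ?exprn_ge0 ?subr_ge0 //.
  by rewrite exprSr mulrA.
apply: int_le => t; first by rewrite lee_fin mulr_ge0 ?indic_ge0 // mulr_ge0 // exprn_ge0 // subr_ge0.
have [tab|tab] := boolP (t \in `[a, b]).
  rewrite indicE mem_setE tab mulr1; apply: IH.
  - by move=> y; exact: g0.
  - move=> y Hy; apply: gb; apply/boxp_cons; split => //.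
rewrite indicE mem_setE (negbTE tab) mulr0; exact: iint_ge0.
Qed.
End IInt.
Section Sph.
Context {R : realType}.

Lemma dotvC k (x y : 'rV[R]_k) : dotv x y = dotv y x.
Proof. by apply: eq_bigr => i _; rewrite mulrC. Qed.

Lemma dotv_ge0 k (x : 'rV[R]_k) : 0 <= dotv x x.
Proof. by apply: sumr_ge0 => i _; rewrite -expr2 sqr_ge0. Qed.

Lemma dotvZl k c (x y : 'rV[R]_k) : dotv (c *: x) y = c * dotv x y.
Proof. by rewrite /dotv mulr_sumr; apply: eq_bigr => i _; rewrite mxE mulrA. Qed.

Lemma dotvZr k c (x y : 'rV[R]_k) : dotv x (c *: y) = c * dotv x y.
Proof. by rewrite dotvC dotvZl dotvC. Qed.

Lemma dotvDl k (x y z : 'rV[R]_k) : dotv (x + y) z = dotv x z + dotv y z.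
Proof. by rewrite /dotv -big_split; apply: eq_bigr => i _; rewrite mxE mulrDl. Qed.

Lemma dotvDr k (x y z : 'rV[R]_k) : dotv z (x + y) = dotv z x + dotv z y.
Proof. by rewrite dotvC dotvDl !(dotvC z). Qed.

Lemma dotvNl k (x y : 'rV[R]_k) : dotv (- x) y = - dotv x y.
Proof. by rewrite -scaleN1r dotvZl mulN1r. Qed.

Lemma dotvNr k (x y : 'rV[R]_k) : dotv x (- y) = - dotv x y.
Proof. by rewrite dotvC dotvNl dotvC. Qed.

Lemma dotv0l k (y : 'rV[R]_k) : dotv 0 y = 0.
Proof. by rewrite /dotv big1 // => i _; rewrite mxE mul0r. Qed.

Lemma coord_sq_le k (x : 'rV[R]_k) i : x 0 i ^+ 2 <= dotv x x.
Proof.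
rewrite /dotv (bigD1 i) //= -expr2 lerDl; apply: sumr_ge0 => j _.
by rewrite -expr2 sqr_ge0.
Qed.

Lemma coord_le1 k (x : 'rV[R]_k) i : dotv x x <= 1 -> `|x 0 i| <= 1.
Proof.
move=> H; have := le_trans (coord_sq_le x i) H.
rewrite -[X in _ <= X -> _](expr1n _ 2) -[x 0 i ^+ 2]ger0_norm ?sqr_ge0 // normrX.
by rewrite ler_pXn2r // nnegrE.
Qed.

Lemma dotv_eq0 k (x : 'rV[R]_k) : dotv x x = 0 -> x = 0.
Proof.
move=> H; apply/rowP => i; rewrite mxE.
have := coord_sq_le x i; rewrite H => h.
apply/eqP; rewrite -sqrf_eq0 eq_le h sqr_ge0 //.
Qed.

Lemma normv_sq k (x : 'rV[R]_k) : normv x ^+ 2 = dotv x x.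
Proof. by rewrite /normv sqr_sqrtr // dotv_ge0. Qed.

Lemma normv_gt0 k (x : 'rV[R]_k) : (0 < normv x) = (0 < dotv x x).
Proof. by rewrite /normv sqrtr_gt0. Qed.

Lemma normalize_sphere k (x : 'rV[R]_k) : 0 < normv x ->
  sphere k ((normv x)^-1 *: x).
Proof.
move=> nx; rewrite /sphere /= dotvZl dotvZr mulrA -expr2 -normv_sq exprVn mulVf //.
by rewrite expf_neq0 // gt_eqF.
Qed.

End Sph.
Section SphInt.
Context {R : realType}.
Local Open Scope ereal_scope.

Definition GF k (F : 'rV[R]_k -> \bar R) (x : 'rV[R]_k) : \bar R :=
  if ((0 < normv x) && (normv x <= 1))%R then F ((normv x)^-1 *: x) else 0.

Lemma GF_ge0 k (F : 'rV[R]_k -> \bar R) : (forall u, sphere k u -> 0 <= F u) ->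
  forall x, 0 <= GF F x.
Proof.
move=> F0 x; rewrite /GF; case: ifPn => // /andP[nx _]; apply: F0.
exact: normalize_sphere.
Qed.

Lemma normv_le1 k (x : 'rV[R]_k) : (normv x <= 1)%R = (dotv x x <= 1)%R.
Proof. by rewrite /normv -{1}sqrtr1 ler_sqrt. Qed.

Lemma sint_upper k (F : 'rV[R]_k -> \bar R) (M : R) : (0 <= M)%R ->
  (forall u, sphere k u -> 0 <= F u <= M%:E) -> iint (GF F) <= (M * 2 ^+ k)%:E.
Proof.
move=> M0 FM.
have -> : (2%R : R) = (1 - (-1))%R by rewrite opprK.
apply: iint_box_upper => //.
- by apply: GF_ge0 => u /FM /andP[].
- move=> x; rewrite /GF; case: ifPn => [/andP[nx _]|_]; last by rewrite lee_fin.
  by have /andP[] := FM _ (normalize_sphere nx).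
- move=> x Hx; rewrite /GF; case: ifPn => // /andP[_ nx1]; exfalso; apply: Hx => i.
  rewrite -ler_norml; apply: coord_le1; by rewrite -normv_le1.
Qed.

Lemma sint_lower k (F : 'rV[R]_k.+1 -> \bar R) (m : R) : (0 <= m)%R ->
  (forall u, sphere k.+1 u -> m%:E <= F u) ->
  (m * ((k.+1%:R)^-1 / 2) ^+ k.+1)%:E <= iint (GF F).
Proof.
move=> m0 Fm.
set b : R := ((k.+1%:R)^-1)%R.
have b0 : (0 < b)%R by rewrite /b invr_gt0 ltr0n.
have -> : (b / 2 = b - b / 2)%R by rewrite {2}(splitr b) addrK.
apply: iint_box_lower => //.
- lra.
- apply: GF_ge0 => u /Fm; apply: le_trans; by rewrite lee_fin.
- move=> x Hx; rewrite /GF.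
  have H1 : (0 < dotv x x)%R.
    apply: lt_le_trans (coord_sq_le x ord0); rewrite exprn_gt0 //.
    have /andP[h _] := Hx ord0; apply: lt_le_trans h; lra.
  have H2 : (dotv x x <= 1)%R.
    apply: le_trans (_ : _ <= \sum_(i < k.+1) b ^+ 2)%R _.
      apply: ler_sum => i _; rewrite -expr2; have /andP[h1 h2] := Hx i.
      rewrite ler_pXn2r ?nnegrE ?(ltW b0) //; lra.
    rewrite sumr_const card_ord -mulr_natl expr2 mulrA /b mulfV ?mul1r //.
      by rewrite invf_le1 // ?ler1n // ltr0n.
  rewrite normv_gt0 H1 normv_le1 H2 /=; apply: Fm; apply: normalize_sphere.
  by rewrite normv_gt0.
Qed.

End SphInt.
Section Pow.
Context {R : realType}.
Lemma powR_le_neg (h p : R) : (p < 0)%R -> (2 <= h)%R -> (h `^ p <= 2 `^ p)%R.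
Proof.
move=> p0 h2.
have h0 : 0 < h by apply: lt_le_trans h2.
have hn : (h == 0) = false by apply/negbTE; apply: lt0r_neq0.
have tn : ((2:R) == 0) = false by apply/negbTE; rewrite pnatr_eq0.
rewrite /powR hn tn ler_expR ler_nM2l // ler_ln // posrE //.
Qed.

Lemma powR2_lt1 (p : R) : (p < 0)%R -> (2 `^ p < 1)%R.
Proof.
move=> p0.
have tn : ((2:R) == 0) = false by apply/negbTE; rewrite pnatr_eq0.
rewrite /powR tn expR_lt1 nmulr_rlt0 // ln_gt0 // ltr1n //.
Qed.
End Pow.
Section Contra.
Context {R : realType}.
Local Open Scope ereal_scope.

Lemma ereal_contra (l K d : R) (Y X : \bar R) : (0 < l < 1)%R -> (0 < K)%R ->
  0 <= Y -> Y <= l%:E * X -> 0 < X -> X <= d%:E -> K%:E * Y <> K%:E * X.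
Proof.
move=> /andP[l0 l1] K0; case: X => [x| |] //; case: Y => [y| |] //.
rewrite !lee_fin lte_fin -!EFinM => y0 yx x0 _ E.
have exy : y = x by apply: (mulfI (lt0r_neq0 K0)); case: E.
rewrite exy in yx; have : (l * x < 1 * x)%R by rewrite ltr_pM2r.
rewrite mul1r => h; have := le_lt_trans yx h; by rewrite ltxx.
Qed.

Lemma Kp_contra k (f H : 'rV[R]_k.+1 -> R) (p c1 c2 : R) : (p < 0)%R -> (0 < c1)%R ->
  (forall u, sphere k.+1 u -> (0 < f u)%R /\ (c1 <= f u <= c2)%R) ->
  (forall u, sphere k.+1 u -> (2 <= H u)%R) ->
  sphere_int (fun x => (f x)%:E * powE (H x) p) <> sphere_int (fun x => (f x)%:E).
Proof.
move=> p0 c10 fb Hb.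
set l := (2 `^ p)%R.
have l0 : (0 < l)%R by apply: powR_gt0.
have l1 : (l < 1)%R by exact: powR2_lt1.
set F1 := fun x => (f x)%:E * powE (H x) p.
set F2 := fun x => (f x)%:E.
have G1le : forall x, GF F1 x <= l%:E * GF F2 x.
  move=> x; rewrite /GF; case: ifP => [/andP[nx _]|_]; last by rewrite mule0.
  have su := normalize_sphere nx.
  set u := (normv x)^-1 *: x in su *.
  have [f0 _] := fb u su; have h2 := Hb u su.
  have Hn : (H u == 0%R) = false by apply/negbTE; apply: lt0r_neq0; apply: lt_le_trans h2.
  rewrite /F1 /F2 /powE Hn -!EFinM lee_fin mulrC ler_wpM2r ?(ltW f0) //.
  exact: powR_le_neg.
have G10 : forall x, 0 <= GF F1 x.
  apply: GF_ge0 => u su; have [f0 _] := fb u su.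
  rewrite /F1; apply: mule_ge0; first by rewrite lee_fin ltW.
  by rewrite /powE; case: ifP => // _; rewrite lee_fin powR_ge0.
have hS := iint_scale l0 G10 G1le.
have up : iint (GF F2) <= (`|c2| * 2 ^+ k.+1)%:E.
  apply: sint_upper => // u su; have [f0 /andP[_ h]] := fb u su.
  rewrite /F2 !lee_fin (ltW f0) /=; apply: le_trans h _; exact: ler_norm.
have lo := @sint_lower R k F2 c1 (ltW c10).
have pos : 0 < iint (GF F2).
  apply: lt_le_trans (lo _); last first.
    by move=> u su; have [_ /andP[h _]] := fb u su; rewrite lee_fin.
  rewrite lte_fin mulr_gt0 // exprn_gt0 // divr_gt0 // invr_gt0 ltr0n //.
move=> E.
apply: (@ereal_contra l (k.+1%:R) _ _ _ _ _ _ hS pos up E).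
- by rewrite l0 l1.
- by rewrite ltr0n.
- exact: iint_ge0.
Qed.
End Contra.
Section Geo1.
Context {R : realType}.

Lemma dotv_mx k (x y : 'rV[R]_k) : dotv x y = (x *m y^T) 0 0.
Proof. by rewrite /dotv mxE; apply: eq_bigr => i _; rewrite mxE. Qed.

Lemma orth_dotv k (A : 'M[R]_k) x y : orthogonal_mx A ->
  dotv (act A x) (act A y) = dotv x y.
Proof.
move=> oA; rewrite !dotv_mx /act trmx_mul mulmxA -(mulmxA x) oA mulmx1 //.
Qed.

Lemma orth_tr k (A : 'M[R]_k) : orthogonal_mx A -> orthogonal_mx A^T.
Proof. by rewrite /orthogonal_mx trmxK => /mulmx1C. Qed.

Lemma orth_sphere k (A : 'M[R]_k) x : orthogonal_mx A -> sphere k x -> sphere k (act A x).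
Proof. by move=> oA; rewrite /sphere /= orth_dotv. Qed.

Lemma orth_entry k (A : 'M[R]_k) i j : orthogonal_mx A -> `|A i j| <= 1.
Proof.
move=> oA.
have H : dotv (row i A) (row i A) = 1.
  have := congr1 (fun B : 'M[R]_k => B i i) oA; rewrite /= !mxE eqxx /= => H.
  by apply: etrans H; apply: eq_bigr => j0 _; rewrite !mxE.
have H1 : dotv (row i A) (row i A) <= 1 by rewrite H.
by have := coord_le1 j H1; rewrite mxE.
Qed.

Lemma dotv_sumr k m (z : 'rV[R]_k) (F : 'I_m -> 'rV[R]_k) :
  dotv z (\sum_(i < m) F i) = \sum_(i < m) dotv z (F i).
Proof.
elim/big_rec2: _ => [|i y1 y2 _ <-]; first by rewrite dotvC dotv0l.
by rewrite dotvDr.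
Qed.

Lemma dotv_bound k (x y : 'rV[R]_k) (M : R) : (forall i, `|x 0 i| <= 1) ->
  (forall i, `|y 0 i| <= M) -> dotv x y <= k%:R * M.
Proof.
move=> hx hy; rewrite /dotv.
apply: le_trans (_ : _ <= \sum_(i < k) M) _; last by rewrite sumr_const card_ord mulr_natl.
apply: ler_sum => i _; apply: le_trans (ler_norm _) _; rewrite normrM.
rewrite -[M]mul1r; apply: ler_pM => //; exact: le_trans (hy i).
Qed.

Lemma entry_le_norm m k (x : 'M[R]_(m, k)) i j : `|x i j| <= `|x|.
Proof.
have -> : `|x| = mx_norm x by [].
rewrite mx_normrE.
exact: (le_bigmax _ (fun ij : 'I_m * 'I_k => `|x ij.1 ij.2|) (i, j)).
Qed.

Lemma dot_le_half k (x y : 'rV[R]_k) : 2 * dotv x y <= dotv x x + dotv y y.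
Proof.
have := dotv_ge0 (x - y).
rewrite dotvDl !dotvDr !dotvNl !dotvNr opprK (dotvC y x); lra.
Qed.

End Geo1.
Section CH.
Context {R : realType}.

Lemma ch_conv k (A : set 'rV[R]_k) x y (t : R) : conv_hull A x -> conv_hull A y ->
  0 <= t <= 1 -> conv_hull A (t *: x + (1 - t) *: y).
Proof.
move=> [m1 [p1 [w1 [A1 w10 w11 ->]]]] [m2 [p2 [w2 [A2 w20 w21 ->]]]] /andP[t0 t1].
have sl : forall j : 'I_m1, @fintype.split m1 m2 (lshift m2 j) = inl j := fun j => unsplitK (inl j).
have sr : forall j : 'I_m2, @fintype.split m1 m2 (rshift m1 j) = inr j := fun j => unsplitK (inr j).
exists (m1 + m2)%N.
exists (fun i => match fintype.split i with inl j => p1 j | inr j => p2 j end).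
exists (fun i => match fintype.split i with inl j => t * w1 j | inr j => (1 - t) * w2 j end).
split.
- by move=> i; case: (fintype.split i).
- move=> i; case: (fintype.split i) => j; apply: mulr_ge0 => //; lra.
- rewrite big_split_ord /=.
  rewrite (eq_bigr (fun j => t * w1 j)); last by move=> j _; case: (splitP (lshift m2 j)) => i /= Hi; [by rewrite (_ : i = j) //; apply: val_inj | by move: (ltn_ord j); rewrite Hi ltnNge leq_addr].
  rewrite [X in _ + X](eq_bigr (fun j => (1 - t) * w2 j)); last by move=> j _; case: (splitP (rshift m1 j)) => i /= Hi; [by move: (ltn_ord i); rewrite -Hi ltnNge leq_addr | by rewrite (_ : i = j) //; apply: val_inj; apply/eqP; rewrite -(eqn_add2l m1) Hi].
  by rewrite -!mulr_sumr w11 w21 !mulr1 addrC subrK.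
- rewrite big_split_ord /=.
  rewrite [X in _ = X + _](eq_bigr (fun j => (t * w1 j) *: p1 j)); last by move=> j _; case: (splitP (lshift m2 j)) => i /= Hi; [by rewrite (_ : i = j) //; apply: val_inj | by move: (ltn_ord j); rewrite Hi ltnNge leq_addr].
  rewrite [X in _ = _ + X](eq_bigr (fun j => ((1 - t) * w2 j) *: p2 j)); last by move=> j _; case: (splitP (rshift m1 j)) => i /= Hi; [by move: (ltn_ord i); rewrite -Hi ltnNge leq_addr | by rewrite (_ : i = j) //; apply: val_inj; apply/eqP; rewrite -(eqn_add2l m1) Hi].
  by rewrite !scaler_sumr; congr (_ + _); apply: eq_bigr => i _; rewrite scalerA.
Qed.

Lemma ch_entry k (A : set 'rV[R]_k) x i : (forall p, A p -> sphere k p) ->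
  conv_hull A x -> `|x 0 i| <= 1.
Proof.
move=> Asp [m [p [w [Ap w0 w1 ->]]]].
rewrite summxE; apply: le_trans (ler_norm_sum _ _ _) _.
rewrite -w1; apply: ler_sum => j _; rewrite mxE normrM ger0_norm //.
rewrite -[X in _ <= X]mulr1; apply: ler_wpM2l => //.
apply: coord_le1; by rewrite (Asp _ (Ap j)).
Qed.

Lemma ch_orbit_inv k (S : set 'M[R]_k) a phi x : subgroup_O S -> S phi ->
  conv_hull [set act psi a | psi in S] x ->
  conv_hull [set act psi a | psi in S] (act phi x).
Proof.
move=> [_ SM _ _] Sphi [m [p [w [Ap w0 w1 ->]]]].
exists m, (fun i => act phi (p i)), w; split => //.
- move=> i; have [psi Spsi <-] := Ap i; exists (psi *m phi); first exact: SM.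
  by rewrite /act mulmxA.
- by rewrite /act mulmx_suml; apply: eq_bigr => i _; rewrite scalemxAl.
Qed.

End CH.
Section Cont.
Context {R : realType}.

Lemma cont_sum (T : topologicalType) (I : Type) (r : seq I) (F : I -> T -> R) :
  (forall i, continuous (F i)) -> continuous (fun x => \sum_(i <- r) F i x).
Proof.
move=> Fc; elim: r => [|i r IH].
  have -> : (fun x => \sum_(i <- [::]) F i x) = (fun=> 0) by apply/funext => x; rewrite big_nil.
  move=> x; exact: cst_continuous.
have -> : (fun x => \sum_(j <- i :: r) F j x) = F i + (fun x => \sum_(j <- r) F j x).
  by apply/funext => x; rewrite big_cons.
move=> x; apply: continuousD; [exact: Fc | exact: IH].
Qed.

Lemma coord_cont (T : topologicalType) k (f : T -> 'rV[R]_k) i : continuous f ->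
  continuous (fun x => f x 0 i).
Proof.
move=> fc x; apply: (@continuous_comp _ _ _ f (fun M : 'rV[R]_k => M 0 i)); first exact: fc.
exact: coord_continuous.
Qed.

Lemma dotv_cont (T : topologicalType) k (f g : T -> 'rV[R]_k) : continuous f -> continuous g ->
  continuous (fun x => dotv (f x) (g x)).
Proof.
move=> fc gc; rewrite /dotv; apply: cont_sum => i x.
apply: continuousM; [exact: coord_cont | exact: coord_cont].
Qed.

Lemma sphere_closed k : closed (sphere k : set 'rV[R]_k).
Proof.
have -> : sphere k = (fun x : 'rV[R]_k => dotv x x) @^-1` [set x | x <= 1] `&`
                     (fun x : 'rV[R]_k => dotv x x) @^-1` [set x | 1 <= x].
  apply/seteqP; split => x /=; first by move=> ->; rewrite lexx.
  by move=> [h1 h2]; apply/eqP; rewrite eq_le h1 h2.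
apply: closedI; apply: preimage_closed; try (exact: closed_le); try (exact: closed_ge);
  move=> x _; apply: dotv_cont => y; exact: id.
Qed.

Lemma bounded_coords k (A : set 'rV[R]_k) (B : R) : 0 <= B ->
  (forall x, A x -> forall i, `|x 0 i| <= B) -> bounded_set A.
Proof.
move=> B0 HB; exists B; split; first exact: num_real.
move=> M hM x Ax /=.
have -> : `|x| = mx_norm x by [].
rewrite mx_normrE; apply: bigmax_le => [|[i j] _]; first lra.
rewrite /= (ord1 i); apply: le_trans (HB _ Ax j) _; lra.
Qed.

Lemma sphere_compact k : compact (sphere k : set 'rV[R]_k).
Proof.
apply: bounded_closed_compact; last exact: sphere_closed.
apply: (@bounded_coords _ _ 1) => // x sx i; apply: coord_le1; by rewrite sx.
Qed.

End Cont.
Section Pos.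
Context {R : realType}.

Lemma ball_rV_coord k (q u : 'rV[R]_k) e : 0 < e -> (forall j, `|q 0 j - u 0 j| < e) -> ball q e u.
Proof. by move=> e0 H; split => // i j; rewrite (ord1 i); rewrite /ball /=; exact: H. Qed.

Lemma no_fixed k (S : set 'M[R]_k.+1) (b : 'rV[R]_k.+1) : spanning_property S ->
  sphere k.+1 b -> (forall phi, S phi -> act phi b = b) -> False.
Proof.
move=> hsp sb fixb.
have [_ [q Pq]] := hsp b sb.
move/nbhs_ballP: Pq => [e /= e0 He].
have sub : forall x, conv_hull [set act psi b | psi in S] x -> x = b.
  move=> x [m [p [w [Ap w0 w1 ->]]]].
  rewrite (eq_bigr (fun i => w i *: b)); first by rewrite -scaler_suml w1 scale1r.
  by move=> i _; have [psi Spsi <-] := Ap i; rewrite fixb.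
have qb : q = b by apply: sub; apply: He; exact: ballxx.
set q' := q + (e / 2) *: delta_mx 0 ord0.
have : q' = b.
  apply: sub; apply: He; apply: ball_rV_coord => // j.
  rewrite /q' !mxE opprD addrA subrr add0r normrN normrM.
  rewrite (ger0_norm (_ : 0 <= e / 2)); last by apply: divr_ge0 => //; exact: ltW.
  have h01 : `|((0 == 0 :> 'I_1) && (j == ord0))%:R| <= 1 :> R.
    by case: (_ && _); rewrite ?normr1 ?normr0.
  apply: le_lt_trans (ler_wpM2l _ h01) _; first by apply: divr_ge0 => //; exact: ltW.
  lra.
rewrite /q' qb => /(congr1 (fun v : 'rV[R]_k.+1 => v 0 ord0)).
rewrite !mxE eqxx mulr1 => h; lra.
Qed.

End Pos.
Section Pos2.
Context {R : realType}.

Lemma act_lin k (A : 'M[R]_k) (x y : 'rV[R]_k) (c : R) :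
  act A (x - y) = act A x - act A y /\ act A (c *: x) = c *: act A x.
Proof. by rewrite /act mulmxBl scalemxAl. Qed.

Lemma sq_lt (x e : R) : 0 < e -> x ^+ 2 < e ^+ 2 -> `|x| < e.
Proof.
move=> e0 h; rewrite -(@ltr_pXn2r _ 2) ?nnegrE ?(ltW e0) //.
by rewrite real_normK ?num_real.
Qed.

Lemma L_pos k (S : set 'M[R]_k.+1) (a z : 'rV[R]_k.+1) : subgroup_O S -> spanning_property S ->
  sphere k.+1 a -> sphere k.+1 z -> exists phi, S phi /\ 0 < dotv z (act phi a).
Proof.
move=> hS hsp sa sz.
have [S1 SM SV Sorth] := hS.
set O := [set act psi a | psi in S].
set P := conv_hull O.
have Osp : forall p, O p -> sphere k.+1 p.
  by move=> p [psi Spsi <-]; apply: orth_sphere => //; exact: Sorth.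
have [_ [q Pq]] := hsp a sa.
move/nbhs_ballP: Pq => [e /= e0 He].
set Pe := [set w | forall u, dotv (u - w) (u - w) < e ^+ 2 -> P u].
have qPe : Pe q.
  move=> u hu; apply: He; apply: ball_rV_coord => // j.
  have := le_lt_trans (coord_sq_le (u - q) j) hu.
  rewrite !mxE => h; rewrite -normrN opprB; exact: sq_lt.
have PeP : forall w, Pe w -> P w.
  move=> w hw; apply: hw; rewrite subrr dotv0l; exact: exprn_gt0.
have Pent : forall w, P w -> forall i, `|w 0 i| <= 1.
  move=> w Pw i; exact: ch_entry Osp Pw.
have Pe_cl : closed Pe.
  move=> w cw u hu.
  set B := [set w' : 'rV[R]_k.+1 | dotv (u - w') (u - w') < e ^+ 2].
  have oB : open B.
    have -> : B = (fun w' => dotv (u - w') (u - w')) @^-1` [set x | x < e ^+ 2] by [].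
    apply: open_comp; last exact: open_lt.
    move=> x _; apply: dotv_cont => y; apply: continuousB => //; exact: cst_continuous.
  have nB : nbhs w B by apply: open_nbhs_nbhs; split.
  have [w' [Pew' Bw']] := cw B nB.
  exact: Pew' Bw'.
have Pe_cpt : compact Pe.
  apply: bounded_closed_compact => //.
  apply: (@bounded_coords _ _ _ 1) => // x Pex; apply: Pent; exact: PeP.
have idc : continuous (fun w : 'rV[R]_k.+1 => w) := fun x => cvg_id.
have [w Pew wmin] := @EVT_min_rV R k.+1 (fun w => dotv w w) Pe (ex_intro _ q qPe) Pe_cpt
   (continuous_subspaceT (dotv_cont idc idc)).
have Pe_inv : forall phi, S phi -> forall w0, Pe w0 -> Pe (act phi w0).
  move=> phi Sphi w0 hw u hu.
  have oph := Sorth _ Sphi.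
  have [uph _] := mulmx1_unit oph.
  set v := act (invmx phi) u.
  have uv : act phi v = u by rewrite /act -mulmxA mulVmx // mulmx1.
  have Pv : P v.
    apply: hw; rewrite -(orth_dotv _ _ oph) (act_lin _ _ _ 0).1 uv //.
  rewrite -uv; exact: ch_orbit_inv.
set h : R := 2^-1.
have h01 : 0 <= h <= 1 by rewrite /h; apply/andP; split; lra.
have Pe_mid : forall w1 w2, Pe w1 -> Pe w2 -> Pe (h *: w1 + (1 - h) *: w2).
  move=> w1 w2 h1 h2 u hu.
  set m := h *: w1 + (1 - h) *: w2.
  have P1 : P (w1 + (u - m)) by apply: h1; rewrite [w1 + _]addrC addrK.
  have P2 : P (w2 + (u - m)) by apply: h2; rewrite [w2 + _]addrC addrK.
  have := ch_conv P1 P2 h01.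
  have -> // : h *: (w1 + (u - m)) + (1 - h) *: (w2 + (u - m)) = u.
  by apply/rowP => j; rewrite /m !mxE; ring.
have wfix : forall phi, S phi -> act phi w = w.
  move=> phi Sphi.
  have oph := Sorth _ Sphi.
  set v := act phi w.
  have Pev : Pe v by apply: Pe_inv => //; rewrite -inE.
  have Pew' : Pe w by rewrite -inE.
  have := wmin (h *: w + (1 - h) *: v); rewrite inE => /(_ (Pe_mid _ _ Pew' Pev)).
  have Em : dotv (h *: w + (1 - h) *: v) (h *: w + (1 - h) *: v) =
     (dotv w w + 2 * dotv w v + dotv v v) / 4.
    rewrite !dotvDl !dotvDr !dotvZl !dotvZr (dotvC v w) /h; by field.
  have ED : dotv (w - v) (w - v) = dotv w w - 2 * dotv w v + dotv v v.
    rewrite !dotvDl !dotvDr !dotvNl !dotvNr (dotvC v w); ring.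
  have Ev : dotv v v = dotv w w by rewrite /v orth_dotv.
  have D0 := dotv_ge0 (w - v).
  rewrite Em Ev => hle.
  have : dotv (w - v) (w - v) = 0 by lra.
  by move/dotv_eq0/eqP; rewrite subr_eq0 eq_sym => /eqP.
have w0 : w = 0.
  apply/eqP; apply: contraT => wn0.
  have dpos : 0 < dotv w w.
    rewrite lt_neqAle dotv_ge0 andbT eq_sym; apply: contra wn0 => /eqP h0.
    by apply/eqP; apply: dotv_eq0.
  have nw : 0 < normv w by rewrite normv_gt0.
  exfalso; apply: (no_fixed hsp (normalize_sphere nw)).
  by move=> phi Sphi; rewrite (act_lin _ _ 0 _).2 wfix.
have Pe0 : Pe 0 by rewrite -w0 -inE.
set u := (e / 2) *: z.
have Pu : P u.
  apply: Pe0; rewrite subr0 /u dotvZl dotvZr sz mulr1.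
  have : e / 2 * (e / 2) < e ^+ 2 by rewrite expr2; nra.
  by [].
move: Pu => [m [p [wt [Ap wt0 wt1 Eu]]]].
have Ez : dotv z u = e / 2 by rewrite /u dotvZr sz mulr1.
rewrite Eu dotv_sumr in Ez.
case: (pselect (exists i, 0 < dotv z (p i))) => [[i hi]|hn].
  have [phi Sphi Ep] := Ap i; exists phi; split => //; by rewrite Ep.
exfalso.
have : \sum_(i < m) dotv z (wt i *: p i) <= 0.
  apply: sumr_le0 => i _; rewrite dotvZr; apply: mulr_ge0_le0 => //.
  by rewrite leNgt; apply/negP => hi; apply: hn; exists i.
rewrite Ez; lra.
Qed.
End Pos2.
Section Unif.
Context {R : realType}.

Definition sumabs k (a : 'rV[R]_k) := \sum_(j < k) `|a 0 j|.

Lemma sumabs_ge0 k (a : 'rV[R]_k) : 0 <= sumabs a.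
Proof. by apply: sumr_ge0 => j _. Qed.

Lemma act_entry_bound k (A : 'M[R]_k) a i : orthogonal_mx A ->
  `|act A a 0 i| <= sumabs a.
Proof.
move=> oA; rewrite /act mxE; apply: le_trans (ler_norm_sum _ _ _) _.
apply: ler_sum => j _; rewrite normrM -[X in _ <= X]mulr1.
apply: ler_wpM2l => //; exact: orth_entry.
Qed.

Lemma dot_bound_gen k (z w : 'rV[R]_k) M : (forall i, `|w 0 i| <= M) ->
  `|dotv z w| <= sumabs z * M.
Proof.
move=> hw; rewrite /dotv /sumabs mulr_suml; apply: le_trans (ler_norm_sum _ _ _) _.
apply: ler_sum => i _; rewrite normrM; apply: ler_wpM2l => //.
Qed.

Lemma sumabs_diff k (a b : 'rV[R]_k) d : (forall j, `|a 0 j - b 0 j| < d) ->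
  sumabs (a - b) <= k%:R * d.
Proof.
move=> h; rewrite /sumabs.
apply: le_trans (_ : _ <= \sum_(j < k) d) _; last by rewrite sumr_const card_ord mulr_natl.
by apply: ler_sum => j _; rewrite !mxE; apply: ltW.
Qed.

Lemma sumabs_tri k (a b : 'rV[R]_k) : sumabs a <= sumabs b + sumabs (a - b).
Proof.
rewrite /sumabs -big_split /=; apply: ler_sum => j _; rewrite !mxE.
by have := ler_normD (b 0 j) (a 0 j - b 0 j); rewrite [b 0 j + _]addrC subrK.
Qed.

End Unif.
Section Unif2.
Context {R : realType}.

Lemma g_diff k (A : 'M[R]_k) (a z a0 z0 : 'rV[R]_k) d : orthogonal_mx A -> 0 < d <= 1 ->
  (forall j, `|a 0 j - a0 0 j| < d) -> (forall j, `|z 0 j - z0 0 j| < d) ->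
  `|dotv z (act A a) - dotv z0 (act A a0)| <= d * (k%:R * (sumabs a0 + k%:R + sumabs z0)).
Proof.
move=> oA /andP[d0 d1] ha hz.
have -> : dotv z (act A a) - dotv z0 (act A a0) =
          dotv (z - z0) (act A a) + dotv z0 (act A (a - a0)).
  rewrite (act_lin _ _ _ 0).1 dotvDl dotvNl dotvDr dotvNr; ring.
have sa := sumabs_diff ha; have sz := sumabs_diff hz.
have sa1 : sumabs a <= sumabs a0 + k%:R * d by apply: le_trans (sumabs_tri a a0) _; rewrite lerD2l.
have e1 : `|dotv (z - z0) (act A a)| <= (k%:R * d) * (sumabs a0 + k%:R * d).
  apply: le_trans (dot_bound_gen _ (fun i => act_entry_bound a i oA)) _.
  apply: ler_pM => //; [exact: sumabs_ge0 | exact: sumabs_ge0].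
have e2 : `|dotv z0 (act A (a - a0))| <= sumabs z0 * (k%:R * d).
  apply: le_trans (dot_bound_gen _ (fun i => act_entry_bound (a - a0) i oA)) _.
  apply: ler_wpM2l => //; exact: sumabs_ge0.
apply: le_trans (ler_normD _ _) _.
have kd : k%:R * d <= k%:R * 1 by apply: ler_wpM2l.
have s0 := sumabs_ge0 a0; have z00 := sumabs_ge0 z0.
have k0 : 0 <= k%:R :> R by [].
have : (k%:R * d) * (sumabs a0 + k%:R * d) <= (k%:R * d) * (sumabs a0 + k%:R).
  apply: ler_wpM2l; first by apply: mulr_ge0 => //; exact: ltW.
  by rewrite lerD2l; rewrite mulr1 in kd.
nra.
Qed.

End Unif2.
Section Unif3.
Context {R : realType}.

Definition Gsup k (S : set 'M[R]_k) (v : 'rV[R]_k * 'rV[R]_k) : R :=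
  sup [set dotv v.2 (act phi v.1) | phi in S].

Lemma Gset_ub k (S : set 'M[R]_k) v : subgroup_O S ->
  ubound [set dotv v.2 (act phi v.1) | phi in S] (sumabs v.2 * sumabs v.1).
Proof.
move=> [_ _ _ So] _ [phi Sphi <-].
apply: le_trans (ler_norm _) _; apply: dot_bound_gen => i; apply: act_entry_bound.
exact: So.
Qed.

Lemma Gset_ne k (S : set 'M[R]_k) v : subgroup_O S ->
  [set dotv v.2 (act phi v.1) | phi in S] !=set0.
Proof. by move=> [S1 _ _ _]; exists (dotv v.2 (act 1%:M v.1)), 1%:M. Qed.

Lemma Gsup_ge k (S : set 'M[R]_k) v phi : subgroup_O S -> S phi ->
  dotv v.2 (act phi v.1) <= Gsup S v.
Proof.
move=> hS Sphi; apply: ub_le_sup; last by exists phi.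
by exists (sumabs v.2 * sumabs v.1); apply: Gset_ub.
Qed.

Lemma Gcont k (S : set 'M[R]_k) : subgroup_O S -> continuous (Gsup S).
Proof.
move=> hS [a0 z0]; apply/cvgrPdist_lt => eps eps0.
set L := k%:R * (sumabs a0 + k%:R + sumabs z0).
have L0 : 0 <= L by apply: mulr_ge0 => //; apply: addr_ge0; [apply: addr_ge0|]; rewrite ?sumabs_ge0.
set d := Num.min 1 (eps / (2 * (L + 1))).
have d0 : 0 < d by rewrite lt_min ltr01 /= divr_gt0 // mulr_gt0 //; lra.
have d1 : d <= 1 by rewrite ge_min lexx.
have dL : d * L < eps.
  have : d <= eps / (2 * (L + 1)) by rewrite ge_min lexx orbT.
  rewrite ler_pdivlMr; last lra.
  nra.
rewrite /prop_near1 /=.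
exists (ball a0 d, ball z0 d); first by split => /=; apply: nbhsx_ballx.
move=> [a z] [/= ba bz].
have ha : forall j, `|a 0 j - a0 0 j| < d.
  by move=> j; case: ba => _ /(_ 0 j); rewrite /ball /= distrC.
have hz : forall j, `|z 0 j - z0 0 j| < d.
  by move=> j; case: bz => _ /(_ 0 j); rewrite /ball /= distrC.
have key : forall phi, S phi ->
    `|dotv z (act phi a) - dotv z0 (act phi a0)| <= d * L.
  move=> phi Sphi; apply: g_diff => //; first by case: hS => _ _ _; apply.
  by rewrite d0 d1.
have up1 : Gsup S (a, z) <= Gsup S (a0, z0) + d * L.
  apply: ge_sup; first exact: Gset_ne.
  move=> _ [phi Sphi <-] /=.
  have := Gsup_ge (a0, z0) hS Sphi; have := key _ Sphi; rewrite /= ler_norml => /andP[_ h1] h2.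
  lra.
have up2 : Gsup S (a0, z0) <= Gsup S (a, z) + d * L.
  apply: ge_sup; first exact: Gset_ne.
  move=> _ [phi Sphi <-] /=.
  have := Gsup_ge (a, z) hS Sphi; have := key _ Sphi; rewrite /= ler_norml => /andP[h1 _] h2.
  lra.
rewrite /= ltr_norml; apply/andP; split; lra.
Qed.

End Unif3.
Section Unif4.
Context {R : realType}.

Lemma sphere_ne k : exists e : 'rV[R]_k.+1, sphere k.+1 e.
Proof.
set d := delta_mx 0 ord0 : 'rV[R]_k.+1.
have : 0 < dotv d d.
  apply: lt_le_trans (coord_sq_le d ord0); rewrite /d mxE !eqxx /= expr1n; exact: ltr01.
rewrite -normv_gt0 => h; exists ((normv d)^-1 *: d); exact: normalize_sphere.
Qed.

Lemma L_unif k (S : set 'M[R]_k.+1) : subgroup_O S -> spanning_property S ->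
  exists c, 0 < c /\ forall a z, sphere k.+1 a -> sphere k.+1 z ->
    exists phi, S phi /\ c <= dotv z (act phi a).
Proof.
move=> hS hsp.
set A := (sphere k.+1 : set 'rV[R]_k.+1) `*` (sphere k.+1 : set 'rV[R]_k.+1).
have cA : compact A := compact_setX (@sphere_compact R k.+1) (@sphere_compact R k.+1).
have nA : A !=set0.
  have [e se] := @sphere_ne k; by exists (e, e).
have [v Av vmin] := compact_EVT_min nA cA (continuous_subspaceT (Gcont hS)).
move: Av; rewrite inE => -[s1 s2].
have [phi [Sphi pos]] := L_pos hS hsp s1 s2.
have G0 : 0 < Gsup S v := lt_le_trans pos (Gsup_ge v hS Sphi).
exists (Gsup S v / 2); split; first lra.
move=> a z sa sz.
have := vmin (a, z) (mem_set (conj sa sz)) => hle.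
have : Gsup S v / 2 < Gsup S (a, z) by lra.
move/(sup_gt (Gset_ne _ hS)) => [y [psi Spsi <-] hy].
by exists psi; split => //; exact: ltW.
Qed.

End Unif4.
Theorem lemma3p2 (R : realType) (n : nat) (S : set 'M[R]_n.+1) :
  (1 <= n)%N -> subgroup_O S -> discrete_set S -> spanning_property S ->
  exists C : R, 0 < C /\
    forall (p : R) (f : 'rV[R]_n.+1 -> R) (c1 c2 : R),
      p < 0 -> 0 < c1 ->
      sphere_borel f ->
      (forall x, sphere n.+1 x -> 0 < f x /\ c1 <= f x <= c2) ->
      (forall phi x, S phi -> sphere n.+1 x -> f (act phi x) = f x) ->
      forall K : set 'rV[R]_n.+1, Kp S p f K ->
        forall x, sphere n.+1 x -> support_fun K x <= C.
Proof.
move=> _ hS _ hsp.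
have [c [c0 hc]] := L_unif hS hsp.
exists (2 / c); split; first by apply: divr_gt0.
move=> p f c1 c2 p0 c10 _ fb _ K [[[cK _ _] K0 Kinv] Keq] x sx.
rewrite leNgt; apply/negP => hgt.
have [M [M0 hM]] : exists M : R, 0 <= M /\ forall y, K y -> forall i, `|y 0 i| <= M.
  have [M1 [_ HM1]] := compact_bounded cK.
  exists (`|M1| + 1); split; first by apply: addr_ge0.
  move=> y Ky i; apply: le_trans (entry_le_norm y 0 i) _.
  apply: (HM1 (`|M1| + 1)) => //.
  by apply: le_lt_trans (ler_norm M1) _; rewrite ltrDl.
have hub : forall z, sphere n.+1 z -> has_ubound [set dotv z y | y in K].
  move=> z sz; exists (n.+1%:R * M) => _ [y Ky <-].
  apply: dotv_bound; last exact: hM.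
  move=> i; apply: coord_le1; by rewrite sz.
have hne : forall z : 'rV[R]_n.+1, [set dotv z y | y in K] !=set0.
  by move=> z; exists (dotv z 0), 0.
have [_ [y Ky <-] hy] := sup_gt (hne x) hgt.
have c2c : 0 < 2 / c by apply: divr_gt0.
have ny : 0 < normv y.
  rewrite normv_gt0 lt_neqAle dotv_ge0 andbT eq_sym; apply/negP => /eqP/dotv_eq0 y0.
  by move: hy; rewrite y0 dotvC dotv0l; lra.
set s := normv y.
set b := s^-1 *: y.
have sb : sphere n.+1 b := normalize_sphere ny.
have yb : y = s *: b by rewrite /b scalerA mulfV ?scale1r // gt_eqF.
have xb : dotv x b <= 1.
  have := dot_le_half x b; rewrite sx sb; lra.
have sgt : 2 / c < s.
  apply: lt_le_trans hy _; rewrite yb dotvZr.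
  rewrite -[X in _ <= X]mulr1; apply: ler_wpM2l => //; exact: ltW.
have Hb : forall z, sphere n.+1 z -> 2 <= support_fun K z.
  move=> z sz.
  have [phi [Sphi hphi]] := hc b z sb sz.
  have Kphi : K (act phi y) by rewrite -(Kinv phi Sphi); exists y.
  apply: le_trans (ub_le_sup (hub z sz) (ex_intro2 _ _ _ Kphi erefl)).
  rewrite yb (act_lin _ _ 0 _).2 dotvZr.
  have : 2 < s * c by rewrite -ltr_pdivrMr.
  have : s * c <= s * dotv z (act phi b) by apply: ler_wpM2l => //; apply: ltW.
  lra.
exact: (Kp_contra p0 c10 fb Hb Keq).
Qed.
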